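(* Let $\mathscr{H}$ be a finite-dimensional complex Hilbert space, let $A=\{a_k\}_{k=1}^{m}$ be a tight frame of $\mathscr{H}$ with frame bound $\alpha>0$ and $B=\{b_j\}_{j=1}^{n}$ a tight frame of $\mathscr{H}$ with frame bound $\beta>0$, and suppose $A$ and $B$ are $s$-order incompatible. Write $I=\{1,\dots,m\}$, $J=\{1,\dots,n\}$. For nonempty $S\subseteq I$, $T\subseteq J$ let $C_{S,T}$ be the optimal lower frame bound of the family $\{a_k\}_{k\in S^c}\cup\{b_j\}_{j\in T^c}$, i.e. the largest $C\ge 0$ with $C\|x\|^2\le\sum_{k\in S^c}|\langle x,a_k\rangle|^2+\sum_{j\in T^c}|\langle x,b_j\rangle|^2$ for all $x\in\mathscr{H}$, and let $C_s=\min\{C_{S,T}: S\subseteq I,\ T\subseteq J \text{ nonempty},\ |S|+|T|<s\}$ (with $C_s=+\infty$ if no such pair exists). Then $C_s>0$, and with $C=1/\min\{\alpha,\beta,C_s\}$, for all subsets $S\subseteq I$, $T\subseteq J$ with $|S|+|T|<s$ and all $x\in\mathscr{H}$, $$\|x\|^2\le C\Big(\sum_{k\in S^c}|\langle x,a_k\rangle|^2+\sum_{j\in T^c}|\langle x,b_j\rangle|^2\Big).$$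
   Context: A finite family $\{a_k\}_{k=1}^{m}\subset\mathscr{H}$ is a tight frame with frame bound $\alpha>0$ if $\sum_{k=1}^{m}|\langle x,a_k\rangle|^2=\alpha\|x\|^2$ for all $x\in\mathscr{H}$. The tight frames $A$ (bound $\alpha$) and $B$ (bound $\beta$) are called $s$-order incompatible, for an integer $s$, if: (1) for all nonempty $S\subseteq I$, $T\subseteq J$ with $|S|+|T|<s$ and every nonzero $x\in\mathscr{H}$, the two equalities $\sum_{k\in S}|\langle x,a_k\rangle|^2=\alpha\|x\|^2$ and $\sum_{j\in T}|\langle x,b_j\rangle|^2=\beta\|x\|^2$ do not both hold; and (2) there exist nonempty $S\subseteq I$, $T\subseteq J$ with $|S|+|T|=s$ and a nonzero $x\in\mathscr{H}$ for which both equalities hold. $S^c=I\setminus S$, $T^c=J\setminus T$. *)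

(* Defs.v *)
From HB Require Import structures.
From mathcomp Require Import all_boot all_order all_algebra.
From mathcomp Require Import complex.
From mathcomp Require Import boolp classical_sets reals constructive_ereal.

Set Implicit Arguments.
Unset Strict Implicit.
Unset Printing Implicit Defensive.

Import Order.TTheory GRing.Theory Num.Theory.
Local Open Scope ring_scope.

Section FrameDefs.
Variable R : realType.
Variable d : nat.

Definition vec := 'I_d -> R[i].

Definition inner (x y : vec) : R[i] := \sum_(i < d) x i * conjc (y i).

Definition sqmod (z : R[i]) : R := let: Complex a b := z in a ^+ 2 + b ^+ 2.
Definition sqnorm (x : vec) : R := \sum_(i < d) sqmod (x i).

Definition fsum (m : nat) (a : 'I_m -> vec) (S : {set 'I_m}) (x : vec) : R :=
  \sum_(k in S) sqmod (inner x (a k)).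

Definition tight_frame (m : nat) (a : 'I_m -> vec) (alpha : R) : Prop :=
  0 < alpha /\ forall x : vec, \sum_(k < m) sqmod (inner x (a k)) = alpha * sqnorm x.

Definition s_order_incompatible (m n : nat) (a : 'I_m -> vec) (b : 'I_n -> vec)
    (alpha beta : R) (s : nat) : Prop :=
  (forall (S : {set 'I_m}) (T : {set 'I_n}) (x : vec),
      S != finset.set0 -> T != finset.set0 -> (#|S| + #|T| < s)%N -> x <> (fun _ => 0) ->
      ~ (fsum a S x = alpha * sqnorm x /\ fsum b T x = beta * sqnorm x)) /\
  (exists (S : {set 'I_m}) (T : {set 'I_n}) (x : vec),
      [/\ S != finset.set0, T != finset.set0, (#|S| + #|T|)%N = s & x <> (fun _ => 0)] /\
      (fsum a S x = alpha * sqnorm x /\ fsum b T x = beta * sqnorm x)).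

Definition compl_sum (m n : nat) (a : 'I_m -> vec) (b : 'I_n -> vec)
    (S : {set 'I_m}) (T : {set 'I_n}) (x : vec) : R :=
  fsum a (~: S) x + fsum b (~: T) x.

Definition opt_lower_bound (m n : nat) (a : 'I_m -> vec) (b : 'I_n -> vec)
    (S : {set 'I_m}) (T : {set 'I_n}) : R :=
  sup [set c : R | 0 <= c /\ forall x : vec, c * sqnorm x <= compl_sum a b S T x].

Definition C_s (m n : nat) (a : 'I_m -> vec) (b : 'I_n -> vec) (s : nat) : \bar R :=
  \big[Order.min/+oo%E]_(S : {set 'I_m} | S != finset.set0)
    \big[Order.min/+oo%E]_(T : {set 'I_n} | (T != finset.set0) && (#|S| + #|T| < s)%N)
      (opt_lower_bound a b S T)%:E.

End FrameDefs.

(* Main.v *)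
Require Import Defs.
From HB Require Import structures.
From mathcomp Require Import all_boot all_order all_algebra.
From mathcomp Require Import complex.
From mathcomp Require Import boolp classical_sets reals constructive_ereal.
From mathcomp Require Import ring lra.
Import Order.TTheory GRing.Theory Num.Theory.
Local Open Scope ring_scope.
Set Implicit Arguments.

Section Aux.
Variable R : realType.
Local Notation Re := (@complex.Re R).
Local Notation Im := (@complex.Im R).

Lemma sqmodE (z : R[i]) : sqmod z = Re z ^+ 2 + Im z ^+ 2.
Proof. by case: z. Qed.

Lemma sqmod_ge0 (z : R[i]) : 0 <= sqmod z.
Proof. rewrite sqmodE; apply: addr_ge0; exact: sqr_ge0. Qed.

Lemma sqmod0 : sqmod (0 : R[i]) = 0.
Proof. by rewrite /= expr0n /= addr0. Qed.

Lemma sqmod_eq0 (z : R[i]) : sqmod z = 0 -> z = 0.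
Proof.
case: z => p q /= h.
have hp : p ^+ 2 = 0 by apply/eqP; rewrite eq_le sqr_ge0 andbT -h lerDl sqr_ge0.
have hq : q ^+ 2 = 0 by apply/eqP; rewrite eq_le sqr_ge0 andbT -h lerDr sqr_ge0.
move/eqP: hp; rewrite sqrf_eq0 => /eqP->.
by move/eqP: hq; rewrite sqrf_eq0 => /eqP->.
Qed.

Lemma Re_sum N (f : 'I_N -> R[i]) : Re (\sum_(k < N) f k) = \sum_(k < N) Re (f k).
Proof. apply: (big_morph Re) => //; by case=> ? ? [] ? ?. Qed.

Lemma Im_sum N (f : 'I_N -> R[i]) : Im (\sum_(k < N) f k) = \sum_(k < N) Im (f k).
Proof. apply: (big_morph Im) => //; by case=> ? ? [] ? ?. Qed.

Lemma sqr_sum N (f : 'I_N -> R) : (\sum_(k < N) f k) ^+ 2 = \sum_(k < N) \sum_(l < N) f k * f l.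
Proof. by rewrite expr2 mulr_suml; apply: eq_bigr => k _; rewrite mulr_sumr. Qed.

Lemma cs_c N (y w : 'I_N -> R[i]) :
  sqmod (\sum_(k < N) y k * w k) <= (\sum_(k < N) sqmod (y k)) * (\sum_(k < N) sqmod (w k)).
Proof.
rewrite sqmodE Re_sum Im_sum !sqr_sum -big_split /=.
have E : (\sum_(k < N) sqmod (y k)) * (\sum_(k < N) sqmod (w k)) =
   \sum_(k < N) \sum_(l < N) ((sqmod (y k) * sqmod (w l) + sqmod (y l) * sqmod (w k)) / 2).
  have E1 : (\sum_(k < N) sqmod (y k)) * (\sum_(k < N) sqmod (w k)) =
     \sum_(k < N) \sum_(l < N) sqmod (y k) * sqmod (w l).
    by rewrite mulr_suml; apply: eq_bigr => k _; rewrite mulr_sumr.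
  have E2 : (\sum_(k < N) sqmod (y k)) * (\sum_(k < N) sqmod (w k)) =
     \sum_(k < N) \sum_(l < N) sqmod (y l) * sqmod (w k).
    by rewrite E1 exchange_big.
  transitivity (((\sum_(k < N) sqmod (y k)) * (\sum_(k < N) sqmod (w k)) +
     (\sum_(k < N) sqmod (y k)) * (\sum_(k < N) sqmod (w k))) / 2).
    by field.
  rewrite {1}E1 E2 -big_split mulr_suml; apply: eq_bigr => k _.
  by rewrite -big_split mulr_suml.
rewrite E; apply: ler_sum => k _; rewrite -big_split /=; apply: ler_sum => l _.
move: (y k) (w k) (y l) (w l) => [p q] [r s] [p' q'] [r' s'] /=.
set u1 := p * r' + q * s'. set u2 := q * r' - p * s'.
set v1 := r * p' + s * q'. set v2 := r * q' - s * p'.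
have h : 0 <= (u1 - v1) ^+ 2 + (u2 - v2) ^+ 2 by apply: addr_ge0; exact: sqr_ge0.
rewrite /u1 /u2 /v1 /v2 in h.
nra.
Qed.

Section Key.
Variable d : nat.

Definition rowv (x : vec R d) : 'rV[R[i]]_d := \row_i x i.

Lemma key N (v : 'I_N -> vec R d) :
  (forall x : vec R d, \sum_(k < N) sqmod (inner x (v k)) = 0 -> x = (fun _ => 0)) ->
  exists c, 0 < c /\ forall x : vec R d, c * sqnorm x <= \sum_(k < N) sqmod (inner x (v k)).
Proof.
move=> H.
pose M : 'M[R[i]]_(d, N) := \matrix_(i, k) conjc (v k i).
have yE x k : (rowv x *m M) 0 k = inner x (v k).
  by rewrite mxE; apply: eq_bigr => i _; rewrite !mxE.
have : row_free M.
  apply: inj_row_free => u uM0.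
  have ux : rowv (fun i => u 0 i) = u by apply/rowP => j; rewrite mxE.
  have := H (fun i => u 0 i).
  have -> : \sum_(k < N) sqmod (inner (fun i => u 0 i) (v k)) = 0.
    by apply: big1 => k _; rewrite -yE ux uM0 mxE sqmod0.
  move=> /(_ erefl) e; apply/rowP => j; rewrite mxE.
  have := congr1 (fun f => f j) e; rewrite /= => ->.
  reflexivity.
case/row_freeP => W MW.
pose K := \sum_(i < d) \sum_(k < N) sqmod (W k i).
have K0 : 0 <= K by apply: sumr_ge0 => i _; apply: sumr_ge0 => k _; exact: sqmod_ge0.
exists (K + 1)^-1; split; first by rewrite invr_gt0 ltr_wpDl.
move=> x.
set Q := \sum_(k < N) sqmod (inner x (v k)).
have Q0 : 0 <= Q by apply: sumr_ge0 => k _; exact: sqmod_ge0.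
have xE : rowv x = rowv x *m M *m W by rewrite -mulmxA MW mulmx1.
have xi i : x i = \sum_(k < N) inner x (v k) * W k i.
  transitivity (rowv x 0 i); first by rewrite mxE.
  by rewrite {1}xE mxE; apply: eq_bigr => k _; rewrite yE.
have : sqnorm x <= Q * K.
  rewrite /sqnorm /K mulr_sumr; apply: ler_sum => i _.
  rewrite xi; exact: cs_c.
move=> h.
rewrite ler_pdivrMl ?ltr_wpDl //.
nra.
Qed.
End Key.

Section Main.
Variables (d m n : nat) (a : 'I_m -> vec R d) (b : 'I_n -> vec R d).

Lemma inner0 (x : vec R d) : inner x (fun _ => 0) = 0.
Proof. by apply: big1 => i _; rewrite conjc0 mulr0. Qed.

Lemma fsum_ge0 p (c : 'I_p -> vec R d) (S : {set 'I_p}) x : 0 <= fsum c S x.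
Proof. by apply: sumr_ge0 => k _; exact: sqmod_ge0. Qed.

Lemma fsum_split p (c : 'I_p -> vec R d) (S : {set 'I_p}) x :
  fsum c S x + fsum c (~: S) x = \sum_(k < p) sqmod (inner x (c k)).
Proof.
rewrite /fsum [RHS](bigID (mem S)) /=; congr (_ + _).
by apply: eq_bigl => k; rewrite finset.in_setC.
Qed.

Lemma sqnorm_pos (x : vec R d) : x <> (fun _ => 0) -> 0 < sqnorm x.
Proof.
move=> nx; rewrite lt_def; apply/andP; split; last by apply: sumr_ge0 => i _; exact: sqmod_ge0.
apply/eqP => h; apply: nx; apply: funext => i.
apply: sqmod_eq0; apply: (psumr_eq0P _ h) => // j _; exact: sqmod_ge0.
Qed.

Definition vST (S : {set 'I_m}) (T : {set 'I_n}) (k : 'I_(m + n)) : vec R d :=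
  match split k with
  | inl i => if i \in ~: S then a i else (fun _ => 0)
  | inr j => if j \in ~: T then b j else (fun _ => 0)
  end.

Lemma compl_sumE S T x :
  compl_sum a b S T x = \sum_(k < m + n) sqmod (inner x (vST S T k)).
Proof.
rewrite big_split_ord /compl_sum /fsum; congr (_ + _); rewrite [LHS]big_mkcond /=; apply: eq_bigr => i _.

  by rewrite /vST (@unsplitK m n (inl i)); case: ifP => _ //; rewrite inner0 sqmod0.
by rewrite /vST (@unsplitK m n (inr i)); case: ifP => _ //; rewrite inner0 sqmod0.
Qed.

Variables (alpha beta : R) (s : nat).
Hypotheses (ta : tight_frame a alpha) (tb : tight_frame b beta)
  (inc : s_order_incompatible a b alpha beta s).

Lemma exists_nz : exists x0 : vec R d, x0 <> (fun _ => 0).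
Proof. by case: inc => _ [S [T [x [[_ _ _ h] _]]]]; exists x. Qed.

Lemma opt_prop (S : {set 'I_m}) (T : {set 'I_n}) : S != finset.set0 -> T != finset.set0 -> (#|S| + #|T| < s)%N ->
  0 < opt_lower_bound a b S T /\
  forall x, opt_lower_bound a b S T * sqnorm x <= compl_sum a b S T x.
Proof.
move=> S0 T0 hs.
have H : forall x, \sum_(k < m + n) sqmod (inner x (vST S T k)) = 0 -> x = (fun _ => 0).
  move=> x; rewrite -compl_sumE /compl_sum => h0.
  have ha : fsum a (~: S) x = 0.
    by apply/eqP; rewrite eq_le fsum_ge0 andbT -h0 lerDl fsum_ge0.
  have hb : fsum b (~: T) x = 0.
    by apply/eqP; rewrite eq_le fsum_ge0 andbT -h0 lerDr fsum_ge0.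
  case: (pselect (x = fun _ => 0)) => // nx; exfalso.
  case: inc => inc1 _; apply: (inc1 S T x S0 T0 hs nx); split.
  - by have := fsum_split a S x; rewrite ha addr0 => ->; case: ta => _ ->.
  - by have := fsum_split b T x; rewrite hb addr0 => ->; case: tb => _ ->.
have [c [c0 hc]] := key _ H.
set E := [set c : R | 0 <= c /\ forall x : vec R d, c * sqnorm x <= compl_sum a b S T x]%classic.
have cE : E c by split; [exact: ltW | by move=> x; rewrite compl_sumE].
have [x0 nx0] := exists_nz.
have hsup : has_sup E.
  split; first by exists c.
  exists (compl_sum a b S T x0 / sqnorm x0) => y [_ hy].
  by rewrite ler_pdivlMr ?sqnorm_pos //; exact: hy.
split.
  by apply: (lt_le_trans c0); exact: sup_upper_bound hsup _ cE.
move=> x.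
case: (pselect (x = fun _ => 0)) => [->|nx].
  rewrite (_ : sqnorm (fun _ => 0) = 0) ?mulr0 /compl_sum ?addr_ge0 ?fsum_ge0 //.
  by apply: big1 => i _; exact: sqmod0.
rewrite -ler_pdivlMr ?sqnorm_pos //.
apply: ge_sup; first by exists c.
move=> y [_ hy]; rewrite ler_pdivlMr ?sqnorm_pos //; exact: hy.
Qed.

End Main.
End Aux.

Unset Implicit Arguments.

Theorem mainTheorem4 (R : realType) (d m n : nat)
    (a : 'I_m -> vec R d) (b : 'I_n -> vec R d) (alpha beta : R) (s : nat) :
  tight_frame a alpha -> tight_frame b beta ->
  s_order_incompatible a b alpha beta s ->
  (0 < C_s a b s)%E /\
  let C := (fine (Order.min (Order.min alpha beta)%:E (C_s a b s)))^-1 in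
  forall (S : {set 'I_m}) (T : {set 'I_n}) (x : vec R d),
    (#|S| + #|T| < s)%N ->
    sqnorm x <= C * compl_sum a b S T x.
Proof.
move=> ta tb inc.
have Cpos : (0 < C_s a b s)%E.
  apply/bigmin_gtP; split; first by rewrite ltry.
  move=> S S0; apply/bigmin_gtP; split; first by rewrite ltry.
  move=> T /andP[T0 hs].
  by rewrite lte_fin; case: (opt_prop ta tb inc _ _ S0 T0 hs).
have Cle : forall (S : {set 'I_m}) (T : {set 'I_n}), S != finset.set0 -> T != finset.set0 ->
    (#|S| + #|T| < s)%N -> (C_s a b s <= (opt_lower_bound a b S T)%:E)%E.
  move=> S T S0 T0 hs.
  apply: (bigmin_inf S) => //; apply: (bigmin_inf T) => //; by rewrite T0 hs.
split => //.
move=> C S T x hs.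
have [al0 _] := ta; have [be0 _] := tb.
have [mu0 [mua [mub muST]]] : 0 < fine (Order.min (Order.min alpha beta)%:E (C_s a b s)) /\
   fine (Order.min (Order.min alpha beta)%:E (C_s a b s)) <= alpha /\
   fine (Order.min (Order.min alpha beta)%:E (C_s a b s)) <= beta /\
   forall (S : {set 'I_m}) (T : {set 'I_n}), S != finset.set0 -> T != finset.set0 ->
    (#|S| + #|T| < s)%N -> 
   fine (Order.min (Order.min alpha beta)%:E (C_s a b s)) <= opt_lower_bound a b S T.
  move: Cle Cpos; case: (C_s a b s) => [r| |] // Cle Cpos.
  - rewrite -EFin_min /=; rewrite lte_fin in Cpos.
    split; first by rewrite !lt_min al0 be0 Cpos.
    split; first by rewrite !ge_min lexx.
    split; first by rewrite !ge_min lexx orbT.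
    move=> S' T' S0 T0 h; have := Cle S' T' S0 T0 h; rewrite lee_fin => h'.
    by rewrite ge_min h' orbT.
  - rewrite miney /=.
    split; first by rewrite lt_min al0 be0.
    split; first by rewrite ge_min lexx.
    split; first by rewrite ge_min lexx orbT.
    by move=> S' T' S0 T0 h; have := Cle S' T' S0 T0 h.
set mu := fine _ in mu0 mua mub muST C *.
have sq0 : 0 <= sqnorm x by apply: sumr_ge0 => i _; exact: sqmod_ge0.
rewrite /C mulrC ler_pdivlMr //.
have [->|S0] := eqVneq S finset.set0.
  have : compl_sum a b finset.set0 T x >= alpha * sqnorm x.
    rewrite /compl_sum; case: ta => _ <-.
    rewrite -(fsum_split a finset.set0 x) /fsum big_set0 add0r lerDl.
    exact: fsum_ge0.
  move=> h; apply: le_trans h; rewrite mulrC; exact: ler_wpM2r.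
have [->|T0] := eqVneq T finset.set0.
  have : compl_sum a b S finset.set0 x >= beta * sqnorm x.
    rewrite /compl_sum; case: tb => _ <-.
    rewrite -(fsum_split b finset.set0 x) /fsum big_set0 add0r lerDr.
    exact: fsum_ge0.
  move=> h; apply: le_trans h; rewrite mulrC; exact: ler_wpM2r.
have [_ h] := opt_prop ta tb inc _ _ S0 T0 hs.
apply: le_trans (h x); rewrite mulrC; apply: ler_wpM2r => //; exact: muST.
Qed.
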